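(* $\displaystyle\lim_{N\to\infty,\ N\text{ even}}\frac{m^*_N}{2^{(N-1)/2}}=1.$ In particular, for large even $N$, quantum correlations certifying $N$ bits of device-independent randomness (via the strategies $S_{\theta^*_N}$ and expressions $I_{\theta^*_N}$) achieve MABK values arbitrarily close (in ratio) to the maximal quantum value $2^{(N-1)/2}$.
   Context: For even $N$: $\theta^*_N=2\pi t_N/(N+1)$ with $t_N=N/4+1/2,\ N/4,\ 3N/4+1/2,\ 3N/4+1$ according as $N\equiv2,4,6,0\pmod 8$, and $m^*_N=\langle M_N(\theta^*_N)\rangle$ where $\langle M_N(\theta)\rangle=2^{\frac{N-1}2}\big(\cos^N(\theta/2+\pi/4)\sin(N\theta/2+\pi/4)+\cos^N(\theta/2-\pi/4)\sin(N\theta/2-\pi/4)\big)$ is the MABK value of the strategy $S_\theta$ (state $(|0\rangle^{\otimes N}+i|1\rangle^{\otimes N})/\sqrt2$, $A_0^{(k)}=\sigma_X$, $A^{(k)}_1=\cos\theta\sigma_X+\sin\theta\sigma_Y$). The maximal quantum MABK value is $2^{(N-1)/2}$. *)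

(* Defs.v *)
From Stdlib Require Import Reals Lra Lia.
From Coquelicot Require Import Coquelicot.
Open Scope R_scope.

Definition qmax (N : nat) : R := Rpower 2 ((INR N - 1) / 2).

Definition MABK (N : nat) (theta : R) : R :=
  qmax N *
  ( (cos (theta / 2 + PI / 4)) ^ N * sin (INR N * theta / 2 + PI / 4)
  + (cos (theta / 2 - PI / 4)) ^ N * sin (INR N * theta / 2 - PI / 4)).

(* t_N for even N, according to N mod 8 (value for odd N is irrelevant). *)
Definition t_N (N : nat) : R :=
  match Nat.modulo N 8 with
  | 2%nat => INR N / 4 + 1 / 2
  | 4%nat => INR N / 4
  | 6%nat => 3 * INR N / 4 + 1 / 2
  | 0%nat => 3 * INR N / 4 + 1
  | _ => 0
  end.

Definition theta_star (N : nat) : R := 2 * PI * t_N N / (INR N + 1).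

Definition m_star (N : nat) : R := MABK N (theta_star N).

(* Main.v *)
Require Import Defs.
From Stdlib Require Import Reals Lra Lia.
From Coquelicot Require Import Coquelicot.
Open Scope R_scope.

Definition eps (N : nat) : R := PI / (4 * (INR N + 1)).

Lemma qmax_pos N : 0 < qmax N.
Proof. unfold qmax, Rpower. apply exp_pos. Qed.

Lemma ratio_E N : m_star N / qmax N =
  (cos (theta_star N / 2 + PI / 4)) ^ N * sin (INR N * theta_star N / 2 + PI / 4)
  + (cos (theta_star N / 2 - PI / 4)) ^ N * sin (INR N * theta_star N / 2 - PI / 4).
Proof. unfold m_star, MABK. field. apply Rgt_not_eq, qmax_pos. Qed.

Lemma neg_pow_even (y : R) (j : nat) : (- y) ^ (8 * j + 2) = y ^ (8 * j + 2).
Proof. replace (8*j+2)%nat with (2 * (4*j+1))%nat by lia. rewrite !pow_mult.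
  f_equal. ring. Qed.

Lemma mod8 j r : (r < 8)%nat -> Nat.modulo (8 * j + r) 8 = r.
Proof. intros H. replace (8*j+r)%nat with (r + j*8)%nat by lia.
  rewrite Nat.Div0.mod_add. apply Nat.mod_small; auto. Qed.

Lemma case1 j : let N := (8*j+2)%nat in
  m_star N / qmax N = cos (eps N) ^ (N+1) + sin (eps N) ^ (N+1).
Proof.
  intros N. rewrite ratio_E. unfold theta_star, t_N. subst N.
  rewrite mod8 by lia. unfold eps.
  assert (HN : INR (8*j+2) = 8 * INR j + 2) by (rewrite plus_INR, mult_INR; simpl; ring).
  rewrite HN. set (J := INR j). set (e := PI / (4 * (8*J+2+1))).
  assert (HJ : 0 <= J) by apply pos_INR.
  assert (E1 : 2 * PI * ((8*J+2) / 4 + 1/2) / (8*J+2+1) / 2 + PI/4 = PI/2 + e)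
    by (unfold e; field; lra).
  assert (E2 : 2 * PI * ((8*J+2) / 4 + 1/2) / (8*J+2+1) / 2 - PI/4 = e)
    by (unfold e; field; lra).
  assert (E3 : (8*J+2) * (2 * PI * ((8*J+2) / 4 + 1/2) / (8*J+2+1)) / 2 + PI/4
     = (PI - e) + 2 * J * PI) by (unfold e; field; lra).
  assert (E4 : (8*J+2) * (2 * PI * ((8*J+2) / 4 + 1/2) / (8*J+2+1)) / 2 - PI/4
     = (PI/2 - e) + 2 * J * PI) by (unfold e; field; lra).
  rewrite E1, E2, E3, E4. unfold J. rewrite !sin_period.
  rewrite cos_plus, sin_minus, sin_minus, cos_PI2, sin_PI2, sin_PI, cos_PI.
  replace (0 * cos e - 1 * sin e) with (- sin e) by ring.
  rewrite neg_pow_even, !pow_add. simpl pow. ring.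
Qed.

Lemma neg_pow_ev (y : R) (n m : nat) : n = (2*m)%nat -> (- y) ^ n = y ^ n.
Proof. intros ->. rewrite !pow_mult. f_equal. ring. Qed.

Lemma case2 j : let N := (8*j+4)%nat in
  m_star N / qmax N = cos (eps N) ^ (N+1) - sin (eps N) ^ (N+1).
Proof.
  intros N. rewrite ratio_E. unfold theta_star, t_N. subst N.
  rewrite mod8 by lia. unfold eps.
  assert (HN : INR (8*j+4) = 8 * INR j + 4) by (rewrite plus_INR, mult_INR; simpl; ring).
  rewrite HN. set (J := INR j). set (e := PI / (4 * (8*J+4+1))).
  assert (HJ : 0 <= J) by apply pos_INR.
  assert (E1 : 2 * PI * ((8*J+4) / 4) / (8*J+4+1) / 2 + PI/4 = PI/2 - e)
    by (unfold e; field; lra).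
  assert (E2 : 2 * PI * ((8*J+4) / 4) / (8*J+4+1) / 2 - PI/4 = - e)
    by (unfold e; field; lra).
  assert (E3 : (8*J+4) * (2 * PI * ((8*J+4) / 4) / (8*J+4+1)) / 2 + PI/4
     = (PI + e) + 2 * J * PI) by (unfold e; field; lra).
  assert (E4 : (8*J+4) * (2 * PI * ((8*J+4) / 4) / (8*J+4+1)) / 2 - PI/4
     = (PI/2 + e) + 2 * J * PI) by (unfold e; field; lra).
  rewrite E1, E2, E3, E4. unfold J. rewrite !sin_period.
  rewrite cos_minus, cos_neg, sin_plus, sin_plus, cos_PI2, sin_PI2, sin_PI, cos_PI.
  replace (0 * cos e + 1 * sin e) with (sin e) by ring. rewrite !pow_add. simpl pow. ring.
Qed.

Lemma case3 j : let N := (8*j+6)%nat in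
  m_star N / qmax N = cos (eps N) ^ (N+1) + sin (eps N) ^ (N+1).
Proof.
  intros N. rewrite ratio_E. unfold theta_star, t_N. subst N.
  rewrite mod8 by lia. unfold eps.
  assert (HN : INR (8*j+6) = 8 * INR j + 6) by (rewrite plus_INR, mult_INR; simpl; ring).
  assert (HK : INR (3*j+2) = 3 * INR j + 2) by (rewrite plus_INR, mult_INR; simpl; ring).
  rewrite HN. set (J := INR j). set (e := PI / (4 * (8*J+6+1))).
  assert (HJ : 0 <= J) by apply pos_INR.
  assert (E1 : 2 * PI * (3 * (8*J+6) / 4 + 1/2) / (8*J+6+1) / 2 + PI/4 = PI - e)
    by (unfold e; field; lra).
  assert (E2 : 2 * PI * (3 * (8*J+6) / 4 + 1/2) / (8*J+6+1) / 2 - PI/4 = PI/2 - e)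
    by (unfold e; field; lra).
  assert (E3 : (8*J+6) * (2 * PI * (3 * (8*J+6) / 4 + 1/2) / (8*J+6+1)) / 2 + PI/4
     = (PI/2 + e) + 2 * INR (3*j+2) * PI) by (rewrite HK; fold J; unfold e; field; lra).
  assert (E4 : (8*J+6) * (2 * PI * (3 * (8*J+6) / 4 + 1/2) / (8*J+6+1)) / 2 - PI/4
     = e + 2 * INR (3*j+2) * PI) by (rewrite HK; fold J; unfold e; field; lra).
  rewrite E1, E2, E3, E4. rewrite !sin_period.
  rewrite cos_minus, cos_minus, sin_plus, cos_PI2, sin_PI2, sin_PI, cos_PI.
  replace (0 * cos e + 1 * sin e) with (sin e) by ring.
  replace (-1 * cos e + 0 * sin e) with (- cos e) by ring.
  rewrite (neg_pow_ev _ _ (4*j+3)) by lia.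
  rewrite !pow_add. simpl pow. ring.
Qed.

Lemma case0 j : let N := (8*j)%nat in
  m_star N / qmax N = cos (eps N) ^ (N+1) - sin (eps N) ^ (N+1).
Proof.
  intros N. rewrite ratio_E. unfold theta_star, t_N. subst N.
  replace (8*j)%nat with (8*j+0)%nat by lia.
  rewrite mod8 by lia. unfold eps.
  assert (HN : INR (8*j+0) = 8 * INR j + 0) by (rewrite plus_INR, mult_INR; simpl; ring).
  assert (HK : INR (3*j) = 3 * INR j) by (rewrite mult_INR; simpl; ring).
  rewrite HN. set (J := INR j). set (e := PI / (4 * (8*J+0+1))).
  assert (HJ : 0 <= J) by apply pos_INR.
  assert (E1 : 2 * PI * (3 * (8*J+0) / 4 + 1) / (8*J+0+1) / 2 + PI/4 = PI + e)
    by (unfold e; field; lra).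
  assert (E2 : 2 * PI * (3 * (8*J+0) / 4 + 1) / (8*J+0+1) / 2 - PI/4 = PI/2 + e)
    by (unfold e; field; lra).
  assert (E3 : (8*J+0) * (2 * PI * (3 * (8*J+0) / 4 + 1) / (8*J+0+1)) / 2 + PI/4
     = (PI/2 - e) + 2 * INR (3*j) * PI) by (rewrite HK; fold J; unfold e; field; lra).
  assert (E4 : (8*J+0) * (2 * PI * (3 * (8*J+0) / 4 + 1) / (8*J+0+1)) / 2 - PI/4
     = - e + 2 * INR (3*j) * PI) by (rewrite HK; fold J; unfold e; field; lra).
  rewrite E1, E2, E3, E4. rewrite !sin_period.
  rewrite cos_plus, cos_plus, sin_minus, sin_neg, cos_PI2, sin_PI2, sin_PI, cos_PI.
  replace (-1 * cos e - 0 * sin e) with (- cos e) by ring.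
  replace (0 * cos e - 1 * sin e) with (- sin e) by ring.
  rewrite !(neg_pow_ev _ _ (4*j)) by lia.
  rewrite !pow_add. simpl pow. ring.
Qed.

Lemma pow_le1 (x : R) (n : nat) : 0 <= x <= 1 -> x ^ n <= 1.
Proof. intros H. induction n; simpl. lra.
  assert (0 <= x ^ n) by (apply pow_le; lra). nra. Qed.

Lemma bern (a : R) (n : nat) : 0 <= a <= 1 -> 1 - INR n * a <= (1 - a) ^ n.
Proof. intros H. induction n. simpl; lra. rewrite S_INR; simpl pow.
  assert (0 <= INR n) by apply pos_INR. nra. Qed.

Lemma ratio_bound k : let N := (2*k)%nat in
  Rabs (m_star N / qmax N - cos (eps N) ^ (N+1)) <= sin (eps N) ^ (N+1).
Proof.
  intros N. assert (Hs : 0 <= sin (eps N)).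
  { apply sin_ge_0. unfold eps. assert (0 <= INR N) by apply pos_INR.
    assert (0 < PI) by apply PI_RGT_0. apply Rlt_le, Rdiv_lt_0_compat; lra.
    unfold eps. assert (0 <= INR N) by apply pos_INR.
    assert (0 < PI) by apply PI_RGT_0. apply Rle_trans with (PI / 1).
    apply Rmult_le_compat_l. lra. apply Rinv_le_contravar; lra. lra. }
  assert (Hp : 0 <= sin (eps N) ^ (N+1)) by (apply pow_le; lra).
  pose proof (Nat.div_mod k 4 ltac:(lia)) as Hk.
  assert (Hr : (k mod 4 < 4)%nat) by (apply Nat.mod_upper_bound; lia).
  set (j := (k / 4)%nat) in *.
  assert (H4 : (k mod 4 = 0 \/ k mod 4 = 1 \/ k mod 4 = 2 \/ k mod 4 = 3)%nat) by lia.
  destruct H4 as [E|[E|[E|E]]]; rewrite E in Hk.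
  - assert (N = 8*j)%nat by (unfold N; lia). rewrite H in Hp |- *; rewrite case0.
    rewrite Rabs_left1; lra.
  - assert (N = 8*j+2)%nat by (unfold N; lia). rewrite H in Hp |- *; rewrite case1.
    rewrite Rabs_right; lra.
  - assert (N = 8*j+4)%nat by (unfold N; lia). rewrite H in Hp |- *; rewrite case2.
    rewrite Rabs_left1; lra.
  - assert (N = 8*j+6)%nat by (unfold N; lia). rewrite H in Hp |- *; rewrite case3.
    rewrite Rabs_right; lra.
Qed.

Lemma x_lim : is_lim_seq (fun k : nat => / (INR (2*k) + 1)) 0.
Proof.
  assert (Hinf : is_lim_seq (fun k : nat => INR (2*k) + 1) p_infty).
  apply is_lim_seq_le_p_loc with INR; [|apply is_lim_seq_INR].
  exists 0%nat. intros n _. rewrite mult_INR. simpl.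
  assert (0 <= INR n) by apply pos_INR. lra.
  pose proof (is_lim_seq_inv _ _ Hinf ltac:(discriminate)) as H. simpl in H. exact H.
Qed.

Theorem proposition6 :
  is_lim_seq (fun k : nat => m_star (2 * k) / qmax (2 * k)) 1.
Proof.
  set (x := fun k : nat => / (INR (2*k) + 1)).
  apply is_lim_seq_le_le with
    (u := fun k => 1 - (PI*PI/16 + PI/4) * x k) (w := fun k => 1 + PI/4 * x k).
  - intros k. pose proof (ratio_bound k) as HB. cbv zeta in HB.
    set (N := (2*k)%nat) in *.
    assert (HN : 0 <= INR N) by apply pos_INR.
    assert (HPI : 0 < PI) by apply PI_RGT_0. pose proof PI_4.
    assert (Hx : 0 < x k /\ x k <= 1 /\ (INR N + 1) * x k = 1).
    { unfold x. fold N. split. apply Rinv_0_lt_compat; lra. split.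
      rewrite <- Rinv_1. apply Rinv_le_contravar; lra. field. lra. }
    assert (He : eps N = PI/4 * x k) by (unfold eps, x; fold N; field; lra).
    set (e := eps N) in *. set (c := cos e) in *. set (s := sin e) in *.
    assert (He0 : 0 < e) by nra.
    assert (He1 : e <= PI/4) by nra.
    assert (Hs : s < e) by (apply sin_lt_x; lra).
    assert (Hs0 : 0 <= s) by (apply sin_ge_0; lra).
    assert (Hc0 : 0 < c) by (apply cos_gt_0; lra).
    assert (Hc1 : c <= 1) by (apply COS_bound).
    assert (Hsc : s*s + c*c = 1) by (pose proof (sin2_cos2 e); unfold Rsqr in *; fold s c in H0; lra).
    assert (H1c : 1 - c <= s * s) by nra.
    assert (Hsn : s ^ (N+1) <= s).
    { rewrite Nat.add_1_r. simpl. assert (s ^ N <= 1) by (apply pow_le1; lra). nra. }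
    assert (Hcn : c ^ (N+1) <= 1) by (apply pow_le1; lra).
    assert (Hbn : 1 - INR (N+1) * (1 - c) <= c ^ (N+1)).
    { pose proof (bern (1 - c) (N+1) ltac:(lra)) as Hb. replace (1 - (1 - c)) with c in Hb by ring. exact Hb. }
    rewrite plus_INR in Hbn. simpl in Hbn.
    assert (Hq : (INR N + 1) * (1 - c) <= PI*PI/16 * x k).
    { apply Rle_trans with ((INR N + 1) * (e * e)).
      apply Rmult_le_compat_l; nra.
      rewrite He. set (y := x k) in *. clearbody y. replace ((INR N + 1) * (PI / 4 * y * (PI / 4 * y)))
        with (PI*PI/16 * y * ((INR N + 1) * y)) by field.
      destruct Hx as [_ [_ ->]]. lra. }
    apply Rabs_le_between in HB. replace ((PI*PI/16 + PI/4) * x k) with (PI*PI/16*x k + PI/4*x k) by field. rewrite <- He. set (A := PI*PI/16*x k) in *. split; lra.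
  - assert (H2 := is_lim_seq_scal_l _ (PI*PI/16 + PI/4) _ x_lim).
    simpl in H2. rewrite Rmult_0_r in H2.
    assert (H3 := is_lim_seq_minus' _ _ _ _ (is_lim_seq_const 1) H2).
    rewrite Rminus_0_r in H3. exact H3.
  - assert (H2 := is_lim_seq_scal_l _ (PI/4) _ x_lim).
    simpl in H2. rewrite Rmult_0_r in H2.
    assert (H3 := is_lim_seq_plus' _ _ _ _ (is_lim_seq_const 1) H2).
    rewrite Rplus_0_r in H3. exact H3.
Qed.
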